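(* Let $\mathcal{U}\subset\mathbb{R}^n\times\mathbb{R}^p$ be open, let $\mathcal{D}\subset\mathcal{U}$ be nonempty, let $\Gamma:\mathcal{D}\times\mathbb{R}^m\rightrightarrows\mathbb{R}^q$ be such that $\Gamma(\xi,\cdot)$ is positively homogeneous for every $\xi\in\mathcal{D}$, let $\mathcal{A}:\mathcal{U}\to\mathbb{R}^{q\times m}$, and define $\varXi:\mathcal{D}\times\mathbb{R}^m\rightrightarrows\mathbb{R}^q$ by $\varXi(\xi,z):=\mathcal{A}(\xi)z+\Gamma(\xi,z)$. Let $\bar\xi\in\mathcal{D}$ and $\omega\in\mathbb{R}^n\times\mathbb{R}^p$, put $H:=\Gamma(\bar\xi,\cdot)$, $\mathcal{Z}:=\mathrm{bd}\,\mathbb{B}\cap\mathrm{dom}\,H$, $\mathcal{Z}_0:=\{z\in\mathcal{Z}\mid 0\in\mathcal{A}(\bar\xi)z+H(z)\}$ and $\varTheta:=\mathrm{cl}\big(\mathrm{cone}\big(\bigcup_{z\in\mathcal{Z}}H(z)\big)\big)$, and assume: (i) $\bar\xi$ is $\varXi$-singular; (ii) $\Gamma$ is outer semicontinuous; (iii) $\mathcal{A}$ is semidifferentiable at $\bar\xi$ for $\omega$; (iv) the set $\mathcal{A}(\bar\xi)\,\mathrm{dom}\,H$ is closed; (v) there exists $c\ge0$ such that for every $z\in\mathcal{Z}_0$ there are $\varepsilon,\delta>0$ with $\Gamma(\xi,z')\cap\delta\mathbb{B}\subset\Gamma(\bar\xi,z')+c\|\xi-\bar\xi\|\mathbb{B}$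 whenever $(\xi,z')\in(\mathcal{D}\times\mathrm{bd}\,\mathbb{B})\cap((\bar\xi,z)+\varepsilon\mathbb{B})$; (vi) $\big(\mathcal{A}(\bar\xi)\,\mathrm{dom}\,H\big)\cap(-\varTheta)\subset\{0\}$. Then, with $c\ge0$ from (v), \[ d\ell_\varXi(\bar\xi)(\omega)+c\|\omega\|\ \ge\ \min_{z\in\mathcal{Z}_0}\mathrm{dist}\big[0,\ \mathcal{A}'(\bar\xi;\omega)z+\varTheta+\mathcal{A}(\bar\xi)\,\mathrm{dom}\,H\big]. \]
   Context: $\|\cdot\|$ is the Euclidean norm, $\mathbb{B}$ the closed unit ball, $\mathrm{bd}$ the boundary, $\mathrm{cl}$ the closure, $\mathrm{dist}[\xi,Z]$ the distance (with $\mathrm{dist}[\xi,\emptyset]=\infty$), and $\mathrm{cone}(Z):=\bigcup_{\gamma\ge0}\gamma Z$. A set-valued map $H$ is positively homogeneous if $H(\gamma z)=\gamma H(z)$ for all $\gamma>0$ and all $z$. $\Gamma$ is outer semicontinuous if $\limsup_{(\xi',z')\to(\xi,z),\,(\xi',z')\in\mathcal{D}\times\mathbb{R}^m}\Gamma(\xi',z')\subset\Gamma(\xi,z)$ (Painlevé–Kuratowski outer limit) for all $(\xi,z)\in\mathcal{D}\times\mathbb{R}^m$. The least singular value (LSV) function of $\varXi$ is $\ell_\varXi:\mathbb{R}^n\times\mathbb{R}^p\to[0,\infty]$, $\ell_\varXi(\xi):=\infty$ if $\xi\notin\mathcal{D}$ and $\ell_\varXi(\xi):=\inf_{\|z\|=1}\mathrm{dist}[0,\varXi(\xi,z)]$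 if $\xi\in\mathcal{D}$. A point $\bar\xi\in\mathcal{D}$ is $\varXi$-singular if $0\in\varXi(\bar\xi,z)$ for some $z\neq0$. The semiderivative of a single-valued map $\mathcal{A}$ at $\xi\in\mathrm{int}(\mathrm{dom}\,\mathcal{A})$ for $\omega$ is $\mathcal{A}'(\xi;\omega):=\lim_{\tau\searrow0,\omega'\to\omega}(\mathcal{A}(\xi+\tau\omega')-\mathcal{A}(\xi))/\tau$; $\mathcal{A}$ is semidifferentiable at $\xi$ for $\omega$ if this limit exists. The subderivative of $\varphi:\mathbb{R}^N\to\mathbb{R}\cup\{\infty\}$ at $\xi\in\mathrm{dom}\,\varphi$ in direction $\omega$ is $d\varphi(\xi)(\omega):=\liminf_{\tau\searrow0,\omega'\to\omega}(\varphi(\xi+\tau\omega')-\varphi(\xi))/\tau$. *)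

(* Defs.v *)
From HB Require Import structures.
From mathcomp Require Import all_boot all_order all_algebra.
From mathcomp Require Import all_classical all_reals.
From mathcomp Require Import ereal.
Set Implicit Arguments. Unset Strict Implicit. Unset Printing Implicit Defensive.
Import Order.TTheory GRing.Theory Num.Theory.
Local Open Scope classical_set_scope.
Local Open Scope ring_scope.

Section Defs.
Variable R : realType.

Definition enorm (a b : nat) (v : 'M[R]_(a, b)) : R :=
  Num.sqrt (\sum_(i < a) \sum_(j < b) v i j ^+ 2).

Definition pnorm (k l : nat) (x : 'cV[R]_k) (y : 'cV[R]_l) : R :=
  Num.sqrt (enorm x ^+ 2 + enorm y ^+ 2).

(* distance to a set, with dist[x, set0] = +oo *)
Definition edist (k : nat) (x : 'cV[R]_k) (S : set 'cV[R]_k) : \bar R :=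
  ereal_inf [set (enorm (x - y))%:E | y in S].

Definition is_open (k : nat) (U : set 'cV[R]_k) : Prop :=
  forall x, U x -> exists e : R, 0 < e /\ forall y, enorm (y - x) < e -> U y.

Definition eclosure (k : nat) (S : set 'cV[R]_k) : set 'cV[R]_k :=
  [set x | forall e : R, 0 < e -> exists2 y, S y & enorm (x - y) < e].

Definition is_closed (k : nat) (S : set 'cV[R]_k) : Prop :=
  eclosure S `<=` S.

Definition cone (k : nat) (S : set 'cV[R]_k) : set 'cV[R]_k :=
  [set x | exists g : R, 0 <= g /\ exists2 y, S y & x = g *: y].

Definition msum (k : nat) (S T : set 'cV[R]_k) : set 'cV[R]_k :=
  [set x | exists2 a, S a & exists2 b, T b & x = a + b].

Definition sscale (k : nat) (g : R) (S : set 'cV[R]_k) : set 'cV[R]_k :=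
  [set g *: y | y in S].

Definition sdom (k l : nat) (H : 'cV[R]_k -> set 'cV[R]_l) : set 'cV[R]_k :=
  [set z | H z !=set0].

Definition unit_sphere (k : nat) : set 'cV[R]_k := [set z | enorm z = 1].

Definition pos_homogeneous (k l : nat) (H : 'cV[R]_k -> set 'cV[R]_l) : Prop :=
  forall (g : R) z, 0 < g -> H (g *: z) = sscale g (H z).

Definition vcvg (k : nat) (u : nat -> 'cV[R]_k) (x : 'cV[R]_k) : Prop :=
  forall e : R, 0 < e -> exists N, forall i, (N <= i)%N -> enorm (u i - x) < e.

Definition outer_semicontinuous (N m q : nat) (D : set 'cV[R]_N)
  (Gam : 'cV[R]_N -> 'cV[R]_m -> set 'cV[R]_q) : Prop :=
  forall xi z, D xi ->
    forall y, (exists (xs : nat -> 'cV[R]_N) (zs : nat -> 'cV[R]_m)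
                      (ys : nat -> 'cV[R]_q),
                 (forall i, D (xs i)) /\ vcvg xs xi /\ vcvg zs z /\ vcvg ys y /\
                 (forall i, Gam (xs i) (zs i) (ys i))) ->
    Gam xi z y.

Definition XiMap (N m q : nat) (A : 'cV[R]_N -> 'M[R]_(q, m))
  (Gam : 'cV[R]_N -> 'cV[R]_m -> set 'cV[R]_q) (xi : 'cV[R]_N) (z : 'cV[R]_m)
  : set 'cV[R]_q := [set A xi *m z + y | y in Gam xi z].

Definition singular (N m q : nat) (D : set 'cV[R]_N)
  (Xi : 'cV[R]_N -> 'cV[R]_m -> set 'cV[R]_q) (xi : 'cV[R]_N) : Prop :=
  D xi /\ exists z : 'cV[R]_m, z != 0 /\ Xi xi z 0.

Definition lsv (N m q : nat) (D : set 'cV[R]_N)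
  (Xi : 'cV[R]_N -> 'cV[R]_m -> set 'cV[R]_q) (xi : 'cV[R]_N) : \bar R :=
  if `[< D xi >] then
    ereal_inf [set edist 0 (Xi xi z) | z in @unit_sphere m]
  else +oo%E.

Definition is_semideriv (N q m : nat) (A : 'cV[R]_N -> 'M[R]_(q, m))
  (xi w : 'cV[R]_N) (L : 'M[R]_(q, m)) : Prop :=
  forall e : R, 0 < e -> exists2 d : R, 0 < d &
    forall (tau : R) (w' : 'cV[R]_N), 0 < tau -> tau < d -> enorm (w' - w) < d ->
      enorm (tau^-1 *: (A (xi + tau *: w') - A xi) - L) < e.

Definition semidifferentiable (N q m : nat) (A : 'cV[R]_N -> 'M[R]_(q, m))
  (xi w : 'cV[R]_N) : Prop := exists L, is_semideriv A xi w L.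

Definition subderiv (N : nat) (phi : 'cV[R]_N -> \bar R) (xi w : 'cV[R]_N)
  : \bar R :=
  ereal_sup [set ereal_inf
     [set r : \bar R | exists (tau : R) (w' : 'cV[R]_N),
        [/\ 0 < tau, tau < d, enorm (w' - w) < d &
            r = ((phi (xi + tau *: w')%R - phi xi) * (tau^-1)%:E)%E]]
   | d in [set d : R | 0 < d]].

End Defs.

(* Main.v *)
Require Import Defs.
From HB Require Import structures.
From mathcomp Require Import all_boot all_order all_algebra.
From mathcomp Require Import all_classical all_reals.
From mathcomp Require Import ereal.
From mathcomp Require Import topology normedtype sequences.
From mathcomp Require Import ring lra.
Require Import Defs.
Import Order.TTheory GRing.Theory Num.Theory.
Import numFieldTopology.Exports numFieldNormedType.Exports.
Local Open Scope classical_set_scope.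
Local Open Scope ring_scope.
Set Implicit Arguments. Unset Strict Implicit. Unset Printing Implicit Defensive.

Section Norms.
Variable R : realType.

Lemma sq_le (x y : R) : 0 <= y -> x ^+ 2 <= y ^+ 2 -> x <= y.
Proof. move=> y0 h; rewrite leNgt; apply/negP => yx; nra. Qed.

Lemma sq_eq (x y : R) : 0 <= x -> 0 <= y -> x ^+ 2 = y ^+ 2 -> x = y.
Proof. move=> x0 y0 h; apply/eqP; rewrite eq_le; apply/andP; split; apply: sq_le; lra. Qed.

Lemma cauchy_schwarz (I : finType) (f g : I -> R) :
  (\sum_i f i * g i) ^+ 2 <= (\sum_i f i ^+ 2) * (\sum_i g i ^+ 2).
Proof.
have F0 : 0 <= \sum_i f i ^+ 2 by apply: sumr_ge0 => i _; apply: sqr_ge0.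
have G0 : 0 <= \sum_i g i ^+ 2 by apply: sumr_ge0 => i _; apply: sqr_ge0.
have E : \sum_i ((\sum_i f i ^+ 2) * g i - (\sum_i f i * g i) * f i) ^+ 2 =
   (\sum_i f i ^+ 2) * ((\sum_i f i ^+ 2) * (\sum_i g i ^+ 2) - (\sum_i f i * g i) ^+ 2).
  rewrite (eq_bigr (fun i => (\sum_i f i ^+ 2) ^+ 2 * g i ^+ 2
     - (2 * (\sum_i f i ^+ 2) * (\sum_i f i * g i)) * (f i * g i)
     + (\sum_i f i * g i) ^+ 2 * f i ^+ 2)); last by move=> i _; ring.
  rewrite big_split /= sumrB -!mulr_sumr; ring.
have E0 : 0 <= (\sum_i f i ^+ 2) * ((\sum_i f i ^+ 2) * (\sum_i g i ^+ 2) - (\sum_i f i * g i) ^+ 2).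
  by rewrite -E; apply: sumr_ge0 => i _; apply: sqr_ge0.
have [Fz|Fp] := eqVneq (\sum_i f i ^+ 2) 0.
  have fz : forall i, f i = 0.
    move=> i; apply/eqP; rewrite -sqrf_eq0; apply/eqP.
    by apply: (psumr_eq0P _ Fz) => // j _; apply: sqr_ge0.
  rewrite (eq_bigr (fun _ => 0)); last by move=> i _; rewrite fz mul0r.
  by rewrite big1 // expr0n /= Fz mul0r.
have Fpos : 0 < \sum_i f i ^+ 2 by rewrite lt_neqAle eq_sym Fp F0.
rewrite -subr_ge0; move: E0; rewrite pmulr_rge0 //.
Qed.

Definition ss a b (v : 'M[R]_(a, b)) := \sum_(i < a) \sum_(j < b) v i j ^+ 2.

Lemma ss_ge0 a b (v : 'M[R]_(a, b)) : 0 <= ss v.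
Proof. by apply: sumr_ge0 => i _; apply: sumr_ge0 => j _; apply: sqr_ge0. Qed.

Lemma enorm_ge0 a b (v : 'M[R]_(a, b)) : 0 <= enorm v.
Proof. exact: sqrtr_ge0. Qed.

Lemma enorm_sq a b (v : 'M[R]_(a, b)) : enorm v ^+ 2 = ss v.
Proof. by rewrite /enorm sqr_sqrtr // ss_ge0. Qed.

Lemma ss_pair a b (v : 'M[R]_(a, b)) : ss v = \sum_(p : 'I_a * 'I_b) v p.1 p.2 ^+ 2.
Proof. by rewrite /ss pair_bigA. Qed.

Lemma enorm_le a b (u v : 'M[R]_(a, b)) : ss u <= ss v -> enorm u <= enorm v.
Proof. by move=> h; apply: sq_le; rewrite ?enorm_ge0 // !enorm_sq. Qed.

Lemma enorm_eqs a b c d (u : 'M[R]_(a, b)) (v : 'M[R]_(c, d)) : ss u = ss v -> enorm u = enorm v.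
Proof. by move=> h; apply: sq_eq; rewrite ?enorm_ge0 // !enorm_sq. Qed.

Lemma enorm0 a b : enorm (0 : 'M[R]_(a, b)) = 0.
Proof.
rewrite /enorm (eq_bigr (fun _ => 0)) ?big1 ?sqrtr0 // => i _.
by rewrite big1 // => j _; rewrite mxE expr0n.
Qed.

Lemma enormN a b (v : 'M[R]_(a, b)) : enorm (- v) = enorm v.
Proof.
apply: enorm_eqs; apply: eq_bigr => i _; apply: eq_bigr => j _; by rewrite mxE sqrrN.
Qed.

Lemma enormB a b (u v : 'M[R]_(a, b)) : enorm (u - v) = enorm (v - u).
Proof. by rewrite -enormN opprB. Qed.

Lemma enormZ a b (k : R) (v : 'M[R]_(a, b)) : enorm (k *: v) = `|k| * enorm v.
Proof.
apply: sq_eq; rewrite ?enorm_ge0 ?mulr_ge0 ?enorm_ge0 //.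
rewrite exprMn !enorm_sq real_normK ?num_real // /ss mulr_sumr; apply: eq_bigr => i _.
rewrite mulr_sumr; apply: eq_bigr => j _; by rewrite mxE exprMn.
Qed.

Lemma enormD a b (u v : 'M[R]_(a, b)) : enorm (u + v) <= enorm u + enorm v.
Proof.
apply: sq_le; first by rewrite addr_ge0 ?enorm_ge0.
have ip : \sum_(p : 'I_a * 'I_b) u p.1 p.2 * v p.1 p.2 <= enorm u * enorm v.
  apply: sq_le; first by rewrite mulr_ge0 ?enorm_ge0.
  by rewrite exprMn !enorm_sq !ss_pair; apply: cauchy_schwarz.
have -> : enorm (u + v) ^+ 2 = enorm u ^+ 2 + 2 * \sum_(p : 'I_a * 'I_b) u p.1 p.2 * v p.1 p.2 + enorm v ^+ 2.
  rewrite !enorm_sq !ss_pair mulr_sumr -!big_split /=; apply: eq_bigr => p _.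
  rewrite mxE; ring.
nra.
Qed.

Lemma enorm_mul a b c (M : 'M[R]_(a, b)) (N : 'M[R]_(b, c)) : enorm (M *m N) <= enorm M * enorm N.
Proof.
apply: sq_le; first by rewrite mulr_ge0 ?enorm_ge0.
rewrite exprMn !enorm_sq /ss.
rewrite [X in _ <= _ * X]exchange_big /= mulr_suml.
apply: ler_sum => i _; rewrite mulr_sumr; apply: ler_sum => j _.
rewrite mxE; exact: cauchy_schwarz.
Qed.

Lemma entry_le a b (v : 'M[R]_(a, b)) i j : `|v i j| <= enorm v.
Proof.
apply: sq_le; first exact: enorm_ge0.
rewrite real_normK ?num_real // enorm_sq /ss (bigD1 i) //= (bigD1 j) //=.
rewrite -addrA lerDl addr_ge0 //; first by apply: sumr_ge0 => k _; apply: sqr_ge0.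
by apply: sumr_ge0 => k _; apply: sumr_ge0 => l _; apply: sqr_ge0.
Qed.

Lemma enorm_eq0 a b (v : 'M[R]_(a, b)) : enorm v = 0 -> v = 0.
Proof.
move=> h; apply/matrixP => i j; rewrite mxE; apply/eqP; rewrite -normr_le0 -h.
exact: entry_le.
Qed.

Lemma enorm_entries a b (v : 'M[R]_(a, b)) (e : R) : 0 <= e ->
  (forall i j, `|v i j| <= e) -> enorm v <= (a * b)%:R * e.
Proof.
move=> e0 h; apply: sq_le; first by rewrite mulr_ge0.
rewrite enorm_sq.
have -> : (((a * b)%:R * e) ^+ 2 : R) = \sum_(i < a) \sum_(j < b) ((a * b)%:R * e ^+ 2).
  rewrite !sumr_const !card_ord -mulr_natr -mulr_natr natrM; ring.
apply: ler_sum => i _; apply: ler_sum => j _.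
have := h i j; have := normr_ge0 (v i j); rewrite -(real_normK (num_real (v i j))).
have : (1 <= (a * b)%:R :> R).
  rewrite ler1n muln_gt0; apply/andP; split; apply: leq_ltn_trans (leq0n _) _; [exact: ltn_ord i|exact: ltn_ord j].
nra.
Qed.

Lemma pnorm_le k l (x : 'cV[R]_k) (y : 'cV[R]_l) : pnorm x y <= enorm x + enorm y.
Proof.
apply: sq_le; first by rewrite addr_ge0 ?enorm_ge0.
rewrite /pnorm sqr_sqrtr; last by rewrite addr_ge0 ?sqr_ge0.
have := enorm_ge0 x; have := enorm_ge0 y; nra.
Qed.

Lemma enorm_lip a b (u v : 'M[R]_(a, b)) : enorm u <= enorm v + enorm (u - v).
Proof. by have := enormD v (u - v); rewrite [v + _]addrC subrK. Qed.

End Norms.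

Section Helpers.
Variable R : realType.

Lemma inv_nat_gt0 j : 0 < ((j.+1)%:R : R)^-1.
Proof. by rewrite invr_gt0 ltr0Sn. Qed.

Lemma inv_nat_le j k : (j <= k)%N -> ((k.+1)%:R : R)^-1 <= ((j.+1)%:R)^-1.
Proof. by move=> h; rewrite lef_pV2 ?posrE ?ltr0Sn // ler_nat ltnS. Qed.

Lemma inv_nat_le1 j : ((j.+1)%:R : R)^-1 <= 1.
Proof. by rewrite invf_le1 ?ltr0Sn // ler1n. Qed.

Lemma evK (K e : R) : 0 < e -> exists N : nat, forall j, (N <= j)%N -> K * ((j.+1)%:R)^-1 < e.
Proof.
move=> e0; have [N _ hN] := nbhs_infty_gtr (`|K| / e).
exists N => j hj; have := hN j hj; rewrite /= ltr_pdivrMr // => h.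
rewrite -ltr_pdivlMr ?ltr0Sn // invrK.
have hK := ler_norm K.
have -> : ((j.+1)%:R : R) = j%:R + 1 by rewrite -addn1 natrD.
nra.
Qed.

Lemma vcvg_bound k (u : nat -> 'cV[R]_k) x (J0 : nat) (K : R) :
  (forall j, (J0 <= j)%N -> enorm (u j - x) <= K * ((j.+1)%:R)^-1) -> vcvg u x.
Proof.
move=> h e e0; have [N hN] := evK K e0.
exists (maxn J0 N) => i; rewrite geq_max => /andP[h1 h2].
exact: le_lt_trans (h i h1) (hN i h2).
Qed.

Lemma edist_fin k (x : 'cV[R]_k) (S : set 'cV[R]_k) y0 : S y0 ->
  exists d : R, [/\ edist x S = d%:E, 0 <= d,
    (forall y, S y -> d <= enorm (x - y)) &
    (forall e, 0 < e -> exists2 y, S y & enorm (x - y) < d + e)].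
Proof.
move=> Sy0.
have ge0 : (0 <= edist x S)%E.
  by apply: le_ereal_inf_tmp => _ [y _ <-]; rewrite lee_fin enorm_ge0.
have le : (edist x S <= (enorm (x - y0))%:E)%E.
  by apply: ge_ereal_inf; exists (enorm (x - y0))%:E => //; exists y0.
have fin : edist x S \is a fin_num by rewrite ge0_fin_numE // (le_lt_trans le) ?ltry.
have [d hd] : exists d : R, edist x S = d%:E by exists (fine (edist x S)); rewrite fineK.
exists d; split => //.
- by rewrite -lee_fin -hd.
- move=> y Sy; rewrite -lee_fin -hd; apply: ge_ereal_inf.
  by exists (enorm (x - y))%:E => //; exists y.
- move=> e e0.
  have : (edist x S < (d + e)%:E)%E by rewrite hd lte_fin ltrDl.
  by move/ereal_inf_lt => [_ [y Sy <-]]; rewrite lte_fin => h; exists y.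
Qed.

Lemma row_cluster m (v : nat -> 'rV[R]_m) :
  (forall k i, -1 <= v k ord0 i <= 1) ->
  exists x : 'rV[R]_m, forall e : R, 0 < e -> forall J, exists2 k, (J <= k)%N & forall i, `|x ord0 i - v k ord0 i| < e.
Proof.
move=> hv.
have K := @rV_compact _ m (fun=> (`[-1%R, 1%R]%classic : set R)) (fun=> @segment_compact R _ _).
have PF : ProperFilter (v @ \oo) by exact: fmap_proper_filter.
have [|x [Kx clx]] := K (v @ \oo) PF.
  by exists 0%N => // k _ i /=; rewrite in_itv /=; apply: hv.
exists x => e e0 J.
have := clx [set y | exists2 k, (J <= k)%N & y = v k] (ball x e).
case.
- by exists J => // k /= Jk; exists k.
- exact: nbhsx_ballx.
move=> y [[k Jk ->] B]; exists k => // i.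
move: B; rewrite /ball /= /mx_ball => -[_ /(_ ord0 i)].
by rewrite /ball /=.
Qed.

Lemma col_cluster m (u : nat -> 'cV[R]_m) : (forall k, enorm (u k) <= 1) ->
  exists z, forall e, 0 < e -> forall J, exists2 k, (J <= k)%N & enorm (u k - z) < e.
Proof.
move=> hu.
have [|x hx] := row_cluster (v := fun k => (u k)^T).
  move=> k i; rewrite mxE -ler_norml; exact: le_trans (entry_le _ _ _) (hu k).
exists x^T => e e0 J.
have e'0 : 0 < e / (m.+1)%:R by rewrite divr_gt0 ?ltr0Sn.
have [k Jk hk] := hx _ e'0 J; exists k => //.
have hb : enorm (u k - x^T) <= (m * 1)%:R * (e / (m.+1)%:R).
  apply: enorm_entries; first exact: ltW.
  move=> i j; have := hk i; rewrite (ord1 j) !mxE distrC; exact: ltW.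
apply: le_lt_trans hb _.
rewrite muln1 mulrA ltr_pdivrMr ?ltr0Sn //.
have -> : ((m.+1)%:R : R) = m%:R + 1 by rewrite -addn1 natrD.
have : (0 : R) <= m%:R by [].
nra.
Qed.

Lemma subseq_near k (u : nat -> 'cV[R]_k) z :
  (forall e, 0 < e -> forall J, exists2 i, (J <= i)%N & enorm (u i - z) < e) ->
  exists phi : nat -> nat, forall j, (j <= phi j)%N /\ enorm (u (phi j) - z) < ((j.+1)%:R)^-1.
Proof.
move=> h.
have h' : forall j, exists i, (j <= i)%N /\ enorm (u i - z) < ((j.+1)%:R)^-1.
  by move=> j; have [i ? ?] := h _ (inv_nat_gt0 j) j; exists i.
by have [phi hphi] := choice h'; exists phi.
Qed.

Lemma eclosure_sub k (S : set 'cV[R]_k) : S `<=` eclosure S.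
Proof. by move=> x Sx e e0; exists x => //; rewrite subrr enorm0. Qed.

Lemma cone_sub k (S : set 'cV[R]_k) : S `<=` cone S.
Proof. by move=> x Sx; exists 1; split => //; exists x => //; rewrite scale1r. Qed.

Lemma le_of_eps (x y : R) : (forall e, 0 < e -> x <= y + e) -> x <= y.
Proof. by move=> h; apply/ler_addgt0Pr. Qed.

Lemma enormB2 a b (u v : 'M[R]_(a, b)) : enorm (u - v) <= enorm u + enorm v.
Proof. by apply: le_trans (enormD _ _) _; rewrite enormN. Qed.

Lemma enormB3 a b (u v x : 'M[R]_(a, b)) : enorm (u - v - x) <= enorm u + enorm v + enorm x.
Proof. by apply: le_trans (enormB2 _ _) _; rewrite lerD2r enormB2. Qed.

Lemma sphere_lim k (u : nat -> 'cV[R]_k) z : (forall j, enorm (u j) = 1) ->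
  (forall j, enorm (u j - z) < ((j.+1)%:R)^-1) -> enorm z = 1.
Proof.
move=> h1 h2; apply/le_anti/andP; split; apply: le_of_eps => e e0;
  have [N hN] := evK 1 e0; have := hN N (leqnn N); rewrite mul1r => hNe.
- have := enorm_lip z (u N); rewrite h1 enormB => h.
  apply: (le_trans h); rewrite lerD2l; exact: ltW (lt_trans (h2 N) hNe).
- have := enorm_lip (u N) z; rewrite h1 => h.
  apply: (le_trans h); rewrite lerD2l; exact: ltW (lt_trans (h2 N) hNe).
Qed.

End Helpers.

Unset Implicit Arguments.

Theorem theorem2 (R : realType) (n p m q : nat)
  (U D : set 'cV[R]_(n + p))
  (Gam : 'cV[R]_(n + p) -> 'cV[R]_m -> set 'cV[R]_q)
  (A : 'cV[R]_(n + p) -> 'M[R]_(q, m))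
  (xib w : 'cV[R]_(n + p)) (Aw : 'M[R]_(q, m)) (c : R) :
  is_open U -> D `<=` U -> D !=set0 ->
  (forall xi, D xi -> pos_homogeneous (Gam xi)) ->
  D xib ->
  let Xi := XiMap A Gam in
  let H := Gam xib in
  let Z := @unit_sphere R m `&` sdom H in
  let Z0 := [set z | Z z /\ XiMap A Gam xib z 0] in
  let Theta := eclosure (cone (\bigcup_(z in Z) H z)) in
  let AdomH := [set A xib *m z | z in sdom H] in
  (* (i) *) singular D Xi xib ->
  (* (ii) *) outer_semicontinuous D Gam ->
  (* (iii) *) semidifferentiable A xib w ->
  is_semideriv A xib w Aw ->
  (* (iv) *) is_closed AdomH ->
  (* (v) *) 0 <= c ->
  (forall z, Z0 z -> exists (eps delta : R), 0 < eps /\ 0 < delta /\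
     forall xi z', D xi -> unit_sphere z' -> pnorm (xi - xib) (z' - z) <= eps ->
       forall y, Gam xi z' y -> enorm y <= delta ->
         exists2 y', Gam xib z' y' & enorm (y - y') <= c * enorm (xi - xib)) ->
  (* (vi) *) (forall y, AdomH y -> Theta (- y) -> y = 0) ->
  let f := fun z => edist 0 (msum (msum [set Aw *m z] Theta) AdomH) in
  exists2 z0, Z0 z0 &
    (forall z, Z0 z -> (f z0 <= f z)%E) /\
    (f z0 <= subderiv (lsv D Xi) xib w + (c * enorm w)%:E)%E.
Proof.
move=> _ _ _ hom Dxib Xi H Z Z0 Theta AdomH sing osc _ hAw _ c0 hv hvi f.
have hH : pos_homogeneous H := hom xib Dxib.
have negE : forall a b : 'cV[R]_q, a + b = 0 -> b = - a.
  by move=> a b e; apply/eqP; rewrite -addr_eq0 addrC e.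
have inTheta : forall z y, Z z -> H z y -> Theta y.
  by move=> z y Zz Hy; apply: eclosure_sub; apply: cone_sub; exists z.
have Z0_of : forall z, unit_sphere z -> H z (- (A xib *m z)) -> Z0 z /\ A xib *m z = 0.
  move=> z sz hz.
  have Zz : Z z by split => //; exists (- (A xib *m z)).
  have A0z : A xib *m z = 0.
    apply: hvi; first by exists z => //; case: Zz.
    exact: inTheta hz.
  by split => //; split => //; exists (- (A xib *m z)) => //; rewrite subrr.
have Z0P : forall z, Z0 z -> A xib *m z = 0 /\ H z 0.
  move=> z [[sz _] [y hy e]].
  have ey := negE _ _ e; subst y.
  have [_ A0z] := Z0_of z sz hy.
  by split => //; rewrite A0z oppr0 in hy.
have [z1 Z0z1] : exists z1, Z0 z1.
  case: sing => _ [z [zn0 [y hy e]]].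
  have ey := negE _ _ e; subst y.
  have nz : 0 < enorm z.
    rewrite lt_neqAle enorm_ge0 andbT; apply/eqP => h.
    by move: zn0; rewrite (enorm_eq0 (esym h)) eqxx.
  have t0 : 0 < (enorm z)^-1 by rewrite invr_gt0.
  exists ((enorm z)^-1 *: z).
  have sz : unit_sphere ((enorm z)^-1 *: z).
    by rewrite /unit_sphere /= enormZ gtr0_norm // mulVf // gt_eqF.
  suff hz : H ((enorm z)^-1 *: z) (- (A xib *m ((enorm z)^-1 *: z))) by case: (Z0_of _ sz hz).
  rewrite (hH _ _ t0); exists (- (A xib *m z)) => //.
  by rewrite -scalemxAr scalerN.
have Theta0 : Theta 0.
  have [_ h0] := Z0P z1 Z0z1; apply: inTheta h0; by case: Z0z1.
have Adom0 : AdomH 0.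
  have [h0 _] := Z0P z1 Z0z1; exists z1 => //; by case: Z0z1 => [[_ ?] _].
pose S z := msum (msum [set Aw *m z] Theta) AdomH.
have Smem : forall z, S z (Aw *m z).
  move=> z; exists (Aw *m z); last by exists 0 => //; rewrite addr0.
  by exists (Aw *m z) => //; exists 0 => //; rewrite addr0.
have hg : forall z, exists d : R, [/\ f z = d%:E, 0 <= d,
    (forall y, S z y -> d <= enorm (0 - y)) &
    (forall e, 0 < e -> exists2 y, S z y & enorm (0 - y) < d + e)].
  by move=> z; exact: (edist_fin 0 (Smem z)).
have [g Hg] := choice hg.
have glip : forall z z', g z <= g z' + enorm Aw * enorm (z - z').
  move=> z z'; apply: le_of_eps => e e0.
  have [_ _ _ ap] := Hg z'; have [y Sy hy] := ap e e0.
  have [_ _ lb _] := Hg z.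
  case: Sy hy => a1 [a0 ea0 [t Tt ea1]] [b Ab ey] hy; subst.
  have := lb (Aw *m z + t + b).
  have -> : 0 - (Aw *m z + t + b) = (0 - (Aw *m z' + t + b)) - Aw *m (z - z').
    rewrite mulmxBr; move: (Aw *m z) (Aw *m z') => P Q.
    by apply/matrixP => i j; rewrite !mxE; ring.
  move=> h; have {h} h := le_trans (h _) (enormB2 _ _).
  have h2 := enorm_mul Aw (z - z').
  suff : g z <= g z' + e + enorm Aw * enorm (z - z') by lra.
  apply: (le_trans (h _)).
    exists (Aw *m z + t) => //; first by exists (Aw *m z) => //; exists t.
    by exists b.
  have ea : a0 = Aw *m z' := ea0; rewrite ea in hy.
  exact: lerD (ltW hy) h2.
have sphZ0 : forall z, Z0 z -> enorm z = 1 by move=> z [[sz _] _].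
have [z0 [Z0z0 z0min]] : exists z0, Z0 z0 /\ forall z, Z0 z -> g z0 <= g z.
  pose V := ereal_inf [set (g z)%:E | z in Z0].
  have V0 : (0 <= V)%E.
    by apply: le_ereal_inf_tmp => _ [z _ <-]; have [_ ? _ _] := Hg z; rewrite lee_fin.
  have Vle : (V <= (g z1)%:E)%E by apply: ge_ereal_inf; exists (g z1)%:E => //; exists z1.
  have fin : V \is a fin_num by rewrite ge0_fin_numE // (le_lt_trans Vle) ?ltry.
  have [v hv0] : exists v : R, V = v%:E by exists (fine V); rewrite fineK.
  have hk : forall k : nat, exists z, Z0 z /\ g z < v + ((k.+1)%:R)^-1.
    move=> k; have : (V < (v + ((k.+1)%:R)^-1)%:E)%E by rewrite hv0 lte_fin ltrDl inv_nat_gt0.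
    by move/ereal_inf_lt => [_ [z Zz <-]]; rewrite lte_fin => h; exists z.
  have [zs hzs] := choice hk.
  have [|z hz] := col_cluster (u := zs).
    by move=> k; rewrite sphZ0 //; case: (hzs k).
  have [phi hphi] := subseq_near hz.
  have Az : A xib *m z = 0.
    apply: enorm_eq0; apply/le_anti/andP; split; last exact: enorm_ge0.
    apply: le_of_eps => e e0; rewrite add0r.
    have [N hN] := evK (enorm (A xib)) e0.
    have -> : A xib *m z = A xib *m (z - zs (phi N)).
      by rewrite mulmxBr (Z0P _ (hzs (phi N)).1).1 subr0.
    apply: (le_trans (enorm_mul _ _)); apply/ltW; apply: le_lt_trans (hN N (leqnn N)).
    rewrite ler_wpM2l ?enorm_ge0 // enormB; exact/ltW/(hphi N).2.
  have sz : enorm z = 1.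
    apply: (sphere_lim (u := fun j => zs (phi j))) => j; first by rewrite sphZ0 //; case: (hzs (phi j)).
    exact: (hphi j).2.
  have Gz0 : Gam xib z 0.
    apply: (osc xib z Dxib 0); exists (fun=> xib), (fun j => zs (phi j)), (fun=> 0).
    split => //; split; first by move=> e e0; exists 0%N => i _; rewrite subrr enorm0.
    split; first by apply: (vcvg_bound (J0 := 0) (K := 1)) => j _; rewrite mul1r; exact: ltW (hphi j).2.
    split; first by move=> e e0; exists 0%N => i _; rewrite subrr enorm0.
    by move=> j; exact: (Z0P _ (hzs (phi j)).1).2.
  have [Z0z _] : Z0 z /\ A xib *m z = 0 by apply: Z0_of => //; rewrite Az oppr0.
  exists z; split => // z' Z0z'.
  have : (V <= (g z')%:E)%E by apply: ereal_inf_lbound; exists z'.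
  rewrite hv0 lee_fin; apply: le_trans.
  apply: le_of_eps => e e0.
  have [N hN] := evK (1 + enorm Aw) e0.
  have := glip z (zs (phi N)); rewrite enormB => h1.
  have h2 := (hzs (phi N)).2.
  have h3 := inv_nat_le R (hphi N).1.
  have h4 := (hphi N).2.
  have h5 := hN N (leqnn N).
  have h6 := enorm_ge0 Aw.
  move: h1 h2 h3 h4 h5 h6.
  move: ((N.+1)%:R^-1) ((phi N).+1%:R^-1) => a b.
  nra.
exists z0 => //; split.
  move=> z Z0z; have [-> _ _ _] := Hg z0; have [-> _ _ _] := Hg z.
  by rewrite lee_fin; exact: z0min.
have [-> _ _ _] := Hg z0.
set r := g z0.
rewrite leNgt; apply/negP => hlt.
have lsv_ge0 : forall xi, (0 <= lsv D Xi xi)%E.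
  move=> xi; rewrite /lsv; case: asboolP => _; last exact: leey.
  apply: le_ereal_inf_tmp => _ [z _ <-].
  by apply: le_ereal_inf_tmp => _ [y _ <-]; rewrite lee_fin enorm_ge0.
have lsv0 : lsv D Xi xib = 0%E.
  apply/le_anti/andP; split; last exact: lsv_ge0.
  rewrite /lsv; case: asboolP => // _.
  apply: ge_ereal_inf; exists (edist (0 : 'cV[R]_q) (Xi xib z1)).
    by exists z1 => //; case: Z0z1 => [[? _] _].
  apply: ge_ereal_inf; exists (enorm ((0 : 'cV[R]_q) - 0))%:E; last by rewrite subrr enorm0.
  by exists 0 => //; case: Z0z1.
set sd := subderiv (lsv D Xi) xib w in hlt.
have [L [hLr hL]] : exists L : R, L + c * enorm w < r /\ (sd < L%:E)%E.
  move: hlt; case: sd => [s| |] /=.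
  - rewrite -EFinD lte_fin => h; exists ((s + (r - c * enorm w)) / 2).
    by split; [lra | rewrite lte_fin; lra].
  - by rewrite ltNge leey.
  - by move=> _; exists (r - c * enorm w - 1); split; [lra | exact: ltNyr].
have step : forall d, 0 < d -> exists pr : R * 'cV[R]_(n + p) * 'cV[R]_m * 'cV[R]_q,
  [/\ 0 < pr.1.1.1, pr.1.1.1 < d, enorm (pr.1.1.2 - w) < d, D (xib + pr.1.1.1 *: pr.1.1.2) &
     [/\ unit_sphere pr.1.2, Gam (xib + pr.1.1.1 *: pr.1.1.2) pr.1.2 pr.2 &
      enorm (A (xib + pr.1.1.1 *: pr.1.1.2) *m pr.1.2 + pr.2) < L * pr.1.1.1]].
  move=> d d0.
  have : (ereal_inf [set rr | exists (tau : R) (w' : 'cV[R]_(n + p)),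
        [/\ (0 < tau)%R, (tau < d)%R, (enorm (w' - w) < d)%R &
            rr = ((lsv D Xi (xib + tau *: w')%R - lsv D Xi xib) * (tau^-1)%:E)%E]] < L%:E)%E.
    apply: le_lt_trans hL; apply: ereal_sup_ubound; by exists d.
  move/ereal_inf_lt => [_ [tau [w' [t0 td wd ->]]]].
  rewrite lsv0 sube0.
  case E: (lsv D Xi (xib + tau *: w')) => [a| |].
  + rewrite lte_pdivrMr // -EFinM lte_fin => ha.
    move: E; rewrite /lsv; case: asboolP => // Dx E.
    have : (ereal_inf [set edist (0 : 'cV[R]_q) (Xi (xib + tau *: w')%R z) | z in @unit_sphere R m] < (L * tau)%:E)%E.
      by rewrite E lte_fin.
    move/ereal_inf_lt => [_ [z sz <-]] /ereal_inf_lt [_ [x [y Gy <-] <-]].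
    rewrite lte_fin sub0r enormN => hx.
    by exists (tau, w', z, y); split.
  + by rewrite gt0_mulye ?lte_fin ?invr_gt0 // ltNge leey.
  + by have := lsv_ge0 (xib + tau *: w'); rewrite E.
have [F hF] := choice (fun k => step _ (inv_nat_gt0 R k)).
have [|z hz] := col_cluster (u := fun k => (F k).1.2).
  by move=> k; have [_ _ _ _ [-> _ _]] := hF k.
have [phi hphi] := subseq_near hz.
pose t j := (F (phi j)).1.1.1.
pose W j := (F (phi j)).1.1.2.
pose ze j := (F (phi j)).1.2.
pose Y j := (F (phi j)).2.
pose X j := xib + t j *: W j.
pose iv j := ((j.+1)%:R : R)^-1.
have hj : forall j, [/\ 0 < t j, t j < iv j, enorm (W j - w) < iv j, D (X j) &
    [/\ unit_sphere (ze j), Gam (X j) (ze j) (Y j) & enorm (A (X j) *m ze j + Y j) < L * t j]].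
  move=> j; have [? ? ? ? ?] := hF (phi j); have le := inv_nat_le R (hphi j).1.
  by split => //; [exact: lt_le_trans le | exact: lt_le_trans le].
have hz' : forall j, enorm (ze j - z) < iv j := fun j => (hphi j).2.
have L0 : 0 < L.
  have [t0 _ _ _ [_ _ h]] := hj 0%N.
  have := enorm_ge0 (A (X 0%N) *m ze 0%N + Y 0%N); nra.
have ivp : forall j, 0 < iv j := fun j => inv_nat_gt0 R j.
have iv1 : forall j, iv j <= 1 := fun j => inv_nat_le1 R j.
pose eps' := (r - c * enorm w - L) / 4.
have e0 : 0 < eps' by rewrite /eps'; lra.
have eps'E : 4 * eps' = r - c * enorm w - L by rewrite /eps'; lra.
have [d d0 hd] := hAw eps' e0.
have [N0 hN0] := evK 1 d0.
pose E j := (t j)^-1 *: (A (X j) - A xib) - Aw.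
have hE : forall j, (N0 <= j)%N -> enorm (E j) < eps'.
  move=> j hj0; have [t0 tl wl _ _] := hj j; have := hN0 j hj0; rewrite mul1r => ivd.
  by apply: hd => //; [exact: lt_trans tl ivd | exact: lt_trans wl ivd].
have AXe : forall j, A (X j) - A xib = t j *: (Aw + E j).
  move=> j; have [t0 _ _ _ _] := hj j.
  by rewrite /E [Aw + _]addrC subrK scalerA mulfV ?gt_eqF // scale1r.
have AXb : forall j, (N0 <= j)%N -> enorm (A (X j) - A xib) <= t j * (enorm Aw + eps').
  move=> j hj0; have [t0 _ _ _ _] := hj j; rewrite AXe enormZ gtr0_norm // ler_wpM2l ?(ltW t0) //.
  apply: le_trans (enormD _ _) _; rewrite lerD2l; exact: ltW (hE j hj0).
have Wb : forall j, enorm (W j) <= enorm w + iv j.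
  move=> j; have [_ _ wl _ _] := hj j; have := enorm_lip (W j) w; have := wl; lra.
have Xb : forall j, enorm (X j - xib) = t j * enorm (W j).
  move=> j; have [t0 _ _ _ _] := hj j.
  have -> : X j - xib = t j *: W j by rewrite /X addrC addKr.
  by rewrite enormZ gtr0_norm.
have Xb' : forall j, enorm (X j - xib) <= (enorm w + 1) * iv j.
  move=> j; have [t0 tl _ _ _] := hj j; rewrite Xb.
  have := Wb j; have := iv1 j; have := enorm_ge0 (W j); have := enorm_ge0 w; nra.
pose K1 := L + (enorm Aw + eps') + enorm (A xib).
have Yb : forall j, (N0 <= j)%N -> enorm (Y j + A xib *m z) <= K1 * iv j.
  move=> j hj0; have [t0 tl _ _ [sze _ hAY]] := hj j.
  have -> : Y j + A xib *m z = (A (X j) *m ze j + Y j) - (A (X j) - A xib) *m ze j - A xib *m (ze j - z).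
    rewrite mulmxBl mulmxBr.
    move: (A (X j) *m ze j) (A xib *m ze j) (A xib *m z) (Y j) => P Q T V.
    by apply/matrixP => a b; rewrite !mxE; ring.
  apply: le_trans (enormB3 _ _ _) _.
  have b1 := le_trans (enorm_mul _ _) (ler_wpM2r (enorm_ge0 _) (AXb j hj0)).
  have b2 := le_trans (enorm_mul (A xib) (ze j - z)) (ler_wpM2l (enorm_ge0 _) (ltW (hz' j))).
  have {b1} b1 := b1 _ (ze j); rewrite (sze : enorm (ze j) = 1) mulr1 in b1.
  have p1 : L * t j <= L * iv j by rewrite ler_wpM2l ?ltW.
  have p2 : t j * (enorm Aw + eps') <= iv j * (enorm Aw + eps') by apply: ler_wpM2r; [rewrite addr_ge0 ?enorm_ge0 // ltW | exact: ltW].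
  rewrite /K1; lra.
have GZ : Gam xib z (- (A xib *m z)).
  apply: (osc xib z Dxib); exists X, ze, Y; split; first by move=> j; case: (hj j).
  split; first by apply: (vcvg_bound (J0 := 0) (K := enorm w + 1)) => j _; exact: Xb'.
  split; first by apply: (vcvg_bound (J0 := 0) (K := 1)) => j _; rewrite mul1r; exact: ltW (hz' j).
  split; first by apply: (vcvg_bound (J0 := N0) (K := K1)) => j hj0; rewrite opprK; exact: Yb.
  by move=> j; have [_ _ _ _ [_ ? _]] := hj j.
have sz : enorm z = 1.
  apply: (sphere_lim (u := ze)) => j; last exact: hz' j.
  by have [_ _ _ _ [? _ _]] := hj j.
have [Z0z A0z] := Z0_of z sz GZ.
have [eps [delta [eps0 [delta0 hvz]]]] := hv z Z0z.
have [N1 h1] := evK (enorm w + 2) eps0.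
have [N2 h2] := evK K1 delta0.
have [N3 h3] := evK c e0.
have [N4 h4] := evK (enorm Aw) e0.
pose j := maxn N0 (maxn N1 (maxn N2 (maxn N3 N4))).
have j0 : (N0 <= j)%N by rewrite !leq_max leqnn.
have j1 : (N1 <= j)%N by rewrite !leq_max leqnn !orbT.
have j2 : (N2 <= j)%N by rewrite !leq_max leqnn !orbT.
have j3 : (N3 <= j)%N by rewrite !leq_max leqnn !orbT.
have j4 : (N4 <= j)%N by rewrite !leq_max leqnn !orbT.
have [t0 tl wl DX [sze GY hAY]] := hj j.
have pn : pnorm (X j - xib) (ze j - z) <= eps.
  apply: le_trans (pnorm_le _ _) _.
  have h1' : (enorm w + 2) * iv j < eps := h1 j j1.
  have := Xb' j; have := hz' j; lra.
have Yd : enorm (Y j) <= delta.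
  have := Yb j j0; rewrite A0z addr0 => hh; apply: le_trans hh _; exact: ltW (h2 j j2).
have [h Gh hYh] := hvz (X j) (ze j) DX sze pn (Y j) GY Yd.
have Zze : Z (ze j) by split => //; exists h.
have tinv0 : 0 < (t j)^-1 by rewrite invr_gt0.
have Sy : S (ze j) (Aw *m ze j + (t j)^-1 *: h + A xib *m ((t j)^-1 *: ze j)).
  exists (Aw *m ze j + (t j)^-1 *: h).
    exists (Aw *m ze j) => //; exists ((t j)^-1 *: h) => //.
    apply: eclosure_sub; exists (t j)^-1; split; first exact: ltW.
    by exists h => //; exists (ze j).
  exists (A xib *m ((t j)^-1 *: ze j)) => //; exists ((t j)^-1 *: ze j) => //.
  by exists ((t j)^-1 *: h); rewrite (hH _ _ tinv0); exists h.
have gze : g (ze j) <= enorm (Aw *m ze j + (t j)^-1 *: h + A xib *m ((t j)^-1 *: ze j)).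
  by have [_ _ lb _] := Hg (ze j); have := lb _ Sy; rewrite sub0r enormN.
have ident : Aw *m ze j + (t j)^-1 *: h + A xib *m ((t j)^-1 *: ze j) =
    (t j)^-1 *: (A (X j) *m ze j + Y j) - E j *m ze j - (t j)^-1 *: (Y j - h).
  rewrite /E mulmxBl -scalemxAl mulmxBl -scalemxAr.
  move: (A (X j) *m ze j) (A xib *m ze j) (Aw *m ze j) (Y j) (h) ((t j)^-1) => P Q T V h' s'.
  by apply/matrixP => a b; rewrite !mxE; ring.
have yb : enorm (Aw *m ze j + (t j)^-1 *: h + A xib *m ((t j)^-1 *: ze j))
    <= L + eps' + c * enorm (W j).
  rewrite ident; apply: le_trans (enormB3 _ _ _) _.
  rewrite !enormZ gtr0_norm //.
  have b1 : (t j)^-1 * enorm (A (X j) *m ze j + Y j) <= L.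
    by rewrite mulrC ler_pdivrMr // ltW.
  have b2 : enorm (E j *m ze j) <= eps'.
    apply: le_trans (enorm_mul _ _) _; rewrite (sze : enorm (ze j) = 1) mulr1; exact: ltW (hE j j0).
  have b3 : (t j)^-1 * enorm (Y j - h) <= c * enorm (W j).
    rewrite mulrC ler_pdivrMr //; apply: le_trans hYh _; rewrite Xb.
    by rewrite mulrA [c * t j]mulrC -mulrA mulrC.
  lra.
have gl := glip z (ze j); rewrite enormB in gl.
have := z0min z Z0z.
have f1 : enorm Aw * enorm (ze j - z) <= enorm Aw * iv j.
  by rewrite ler_wpM2l ?enorm_ge0 // ltW.
have f2 : c * enorm (W j) <= c * enorm w + c * iv j by rewrite -mulrDr ler_wpM2l.
have h3' : c * iv j < eps' := h3 j j3.
have h4' : enorm Aw * iv j < eps' := h4 j j4.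
rewrite -/r; lra.
Qed.
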